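(* Let $f:[0,2\pi)\to\mathbb{R}$ be a $C^1$ function (viewed as $2\pi$-periodic). Then there exists $C=C(e_0,c)$ such that for each $q\ge3$, $$\Big|\int_0^{2\pi}f(\varphi)c_q(\varphi)\,d\varphi\Big|\le\frac{C\|f\|_{C^1}}{q}\qquad\text{and}\qquad\Big|\int_0^{2\pi}f(\varphi)s_q(\varphi)\,d\varphi\Big|\le\frac{C\|f\|_{C^1}}{q}.$$
   Context: Ellipse with semi-axes $0<b\le a$, eccentricity $e_0=\sqrt{1-b^2/a^2}\in[0,1)$, semi-focal distance $c=\sqrt{a^2-b^2}$. For $0\le k<1$, $F(\varphi;k)=\int_0^\varphi(1-k^2\sin^2\tau)^{-1/2}d\tau$, $K(k)=F(\pi/2;k)$. For $\lambda\in(0,b)$, $k_\lambda=\sqrt{(a^2-b^2)/(a^2-\lambda^2)}$, $\omega_\lambda=F(\arcsin(\lambda/b);k_\lambda)/(2K(k_\lambda))$ (strictly increasing from $0$ to $1/2$); for $q\ge3$, $\omega_{\lambda_q}=1/q$, $k_q=k_{\lambda_q}$. $c_q(\varphi)=\cos\!\big(\tfrac{2\pi q}{4K(k_q)}F(\varphi;k_q)\big)/\sqrt{1-k_q^2\sin^2\varphi}$, $s_q(\varphi)=\sin\!\big(\tfrac{2\pi q}{4K(k_q)}F(\varphi;k_q)\big)/\sqrt{1-k_q^2\sin^2\varphi}$. *)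

(* Defs.v *)
From Stdlib Require Import Reals.
From Coquelicot Require Import Coquelicot.
Open Scope R_scope.

Definition ellF (phi k : R) : R :=
  RInt (fun tau => / sqrt (1 - k ^ 2 * (sin tau) ^ 2)) 0 phi.
Definition ellK (k : R) : R := ellF (PI / 2) k.

(* k_lambda and omega_lambda for the ellipse with semi-axes b <= a. *)
Definition k_lam (a b lam : R) : R := sqrt ((a ^ 2 - b ^ 2) / (a ^ 2 - lam ^ 2)).
Definition omega_lam (a b lam : R) : R :=
  ellF (asin (lam / b)) (k_lam a b lam) / (2 * ellK (k_lam a b lam)).

(* c_q and s_q, given the modulus kq = k_{lambda_q}. *)
Definition c_q (q : nat) (kq phi : R) : R :=
  cos (2 * PI * INR q / (4 * ellK kq) * ellF phi kq) / sqrt (1 - kq ^ 2 * (sin phi) ^ 2).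
Definition s_q (q : nat) (kq phi : R) : R :=
  sin (2 * PI * INR q / (4 * ellK kq) * ellF phi kq) / sqrt (1 - kq ^ 2 * (sin phi) ^ 2).

Definition C1_periodic (f : R -> R) : Prop :=
  (forall x, ex_derive f x) /\ (forall x, continuous (Derive f) x) /\
  (forall x, f (x + 2 * PI) = f x).

Definition sup_norm (g : R -> R) : R :=
  real (Lub_Rbar (fun y => exists x, 0 <= x <= 2 * PI /\ y = Rabs (g x))).

Definition C1_norm (f : R -> R) : R := sup_norm f + sup_norm (Derive f).

(* Main.v *)
Require Import Defs.
From Stdlib Require Import Reals Lra Lia.
From Coquelicot Require Import Coquelicot.
Open Scope R_scope.

Definition gk (k t : R) : R := / sqrt (1 - k ^ 2 * sin t ^ 2).

Lemma den_pos k t : k ^ 2 < 1 -> 0 < 1 - k ^ 2 * sin t ^ 2.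
Proof.
  intros Hk. assert (0 <= sin t ^ 2 <= 1).
  { pose proof (SIN_bound t). split; [apply pow2_ge_0|]. nra. }
  assert (0 <= k ^ 2) by apply pow2_ge_0. nra.
Qed.

Lemma gk_derive k t : k ^ 2 < 1 -> ex_derive (gk k) t.
Proof.
  intros Hk. unfold gk. pose proof (den_pos k t Hk). auto_derive.
  split; [lra|]. split; [|exact I]. apply Rgt_not_eq, sqrt_lt_R0; lra.
Qed.

Lemma gk_cont k t : k ^ 2 < 1 -> continuous (gk k) t.
Proof. intros; apply (ex_derive_continuous (gk k)), gk_derive; auto. Qed.

Lemma gk_ex k a b : k ^ 2 < 1 -> ex_RInt (gk k) a b.
Proof. intros; apply (ex_RInt_continuous (V:=R_CompleteNormedModule)); intros; apply gk_cont; auto. Qed.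

Lemma gk_pos k t : k ^ 2 < 1 -> 0 < gk k t.
Proof. intros; unfold gk; apply Rinv_0_lt_compat, sqrt_lt_R0, den_pos; auto. Qed.

Lemma gk_le k t : k ^ 2 < 1 -> gk k t <= / sqrt (1 - k ^ 2).
Proof.
  intros Hk. unfold gk. apply Rinv_le_contravar.
  apply sqrt_lt_R0; lra. apply sqrt_le_1_alt.
  pose proof (SIN_bound t). assert (0 <= k ^ 2) by apply pow2_ge_0.
  assert (sin t ^ 2 <= 1) by nra. nra.
Qed.

Lemma ellF_derive k x : k ^ 2 < 1 -> is_derive (fun y => ellF y k) x (gk k x).
Proof.
  intros Hk. unfold ellF.
  apply (is_derive_RInt (gk k) (fun y => RInt (gk k) 0 y) 0).
  apply filter_forall. intros y. apply (RInt_correct (V:=R_CompleteNormedModule)), gk_ex; auto.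
  apply gk_cont; auto.
Qed.

Lemma ellF_ex k x : k ^ 2 < 1 -> ex_derive (fun y => ellF y k) x.
Proof. intros; eexists; apply ellF_derive; auto. Qed.

Lemma ellF_0 k : ellF 0 k = 0.
Proof. unfold ellF. exact (RInt_point (V:=R_CompleteNormedModule) 0 _). Qed.

Lemma ellF_2PI k : k ^ 2 < 1 -> ellF (2 * PI) k = 4 * ellK k.
Proof.
  intros Hk. unfold ellK, ellF.
  assert (e1 : RInt (gk k) 0 PI + RInt (gk k) PI (2 * PI) = RInt (gk k) 0 (2 * PI)).
  { exact (RInt_Chasles (gk k) 0 PI (2 * PI) (gk_ex _ _ _ Hk) (gk_ex _ _ _ Hk)). }
  assert (e3 : RInt (gk k) 0 (PI/2) + RInt (gk k) (PI/2) PI = RInt (gk k) 0 PI).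
  { exact (RInt_Chasles (gk k) 0 (PI/2) PI (gk_ex _ _ _ Hk) (gk_ex _ _ _ Hk)). }
  assert (e2 : RInt (gk k) PI (2 * PI) = RInt (gk k) 0 PI).
  { pose proof (RInt_comp_lin (gk k) 1 PI 0 PI (gk_ex _ _ _ Hk)) as H.
    replace (1 * 0 + PI) with PI in H by ring.
    replace (1 * PI + PI) with (2 * PI) in H by ring.
    rewrite <- H. apply RInt_ext. intros x _.
    unfold scal; simpl; unfold mult; simpl. unfold gk.
    replace (1 * x + PI) with (x + PI) by ring. rewrite neg_sin. replace ((- sin x) ^ 2) with (sin x ^ 2) by ring. ring. }
  assert (e4 : RInt (gk k) (PI/2) PI = RInt (gk k) 0 (PI/2)).
  { pose proof (RInt_comp_lin (gk k) (-1) PI (PI/2) 0 (gk_ex _ _ _ Hk)) as H.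
    replace (-1 * (PI/2) + PI) with (PI/2) in H by field.
    replace (-1 * 0 + PI) with PI in H by ring.
    rewrite <- H.
    rewrite <- (opp_RInt_swap (gk k) (PI/2) 0 (gk_ex _ _ _ Hk)).
    rewrite <- RInt_opp by (apply gk_ex; auto).
    apply RInt_ext. intros x _.
    unfold scal; simpl; unfold mult; simpl. unfold gk, opp; simpl.
    replace (-1 * x + PI) with (PI - x) by ring. rewrite sin_PI_x. ring. }
  unfold gk in *; lra.
Qed.
Lemma K_pos k : k ^ 2 < 1 -> 0 < ellK k.
Proof.
  intros Hk. unfold ellK, ellF. change (fun tau => / sqrt (1 - k ^ 2 * sin tau ^ 2)) with (gk k).
  apply RInt_gt_0. pose proof PI_RGT_0; lra.
  intros; apply gk_pos; auto.
  intros; apply gk_cont; auto.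
Qed.

Lemma k_lam_sq a b lam : 0 < b <= a -> 0 < lam < b ->
  k_lam a b lam ^ 2 = (a ^ 2 - b ^ 2) / (a ^ 2 - lam ^ 2).
Proof.
  intros Hb Hl. unfold k_lam. apply pow2_sqrt.
  apply Rdiv_le_0_compat; nra.
Qed.

Lemma k_lam_lt1 a b lam : 0 < b <= a -> 0 < lam < b -> k_lam a b lam ^ 2 < 1.
Proof.
  intros Hb Hl. rewrite k_lam_sq by auto.
  apply Rmult_lt_reg_r with (a ^ 2 - lam ^ 2). nra.
  unfold Rdiv. rewrite Rmult_assoc, Rinv_l by nra. nra.
Qed.

Lemma sin_third x : 0 <= x <= 2 -> x / 3 <= sin x.
Proof.
  intros Hx. pose proof PI_4. pose proof PI2_1.
  assert (Hs := sin_bound x 0 ltac:(lra) ltac:(lra)). destruct Hs as [Hs _].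
  unfold sin_approx in Hs. simpl in Hs. unfold sin_term in Hs. simpl in Hs.
  assert (x * x <= 4) by nra. assert (x * (x * (x * 1)) <= 4 * x) by nra. lra.
Qed.

Lemma K_bound a b lam q : 0 < b <= a -> 0 < lam < b -> (3 <= q)%nat ->
  omega_lam a b lam = / INR q -> ellK (k_lam a b lam) <= 9 * a / b.
Proof.
  intros Hb Hl Hq Hom.
  pose proof (k_lam_sq a b lam Hb Hl) as Hksq.
  pose proof (k_lam_lt1 a b lam Hb Hl) as Hk.
  unfold omega_lam in Hom.
  set (k := k_lam a b lam) in *.
  set (th := asin (lam / b)) in *.
  pose proof (K_pos k Hk) as HK.
  assert (Hlb : 0 < lam / b < 1).
  { split. apply Rdiv_lt_0_compat; lra.
    replace 1 with (b / b) by (field; lra). unfold Rdiv.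
    apply Rmult_lt_compat_r; [apply Rinv_0_lt_compat|]; lra. }
  pose proof (asin_bound (lam / b)) as Hth. fold th in Hth.
  assert (Hsth : sin th = lam / b) by (apply sin_asin; lra).
  assert (Hth0 : 0 <= th).
  { destruct (Rle_or_lt 0 th) as [h|h]; auto.
    assert (sin th <= sin 0) by (apply sin_incr_1; lra).
    rewrite sin_0 in H. lra. }
  assert (Hq3 : 3 <= INR q) by (replace 3 with (INR 3) by (simpl; ring); apply le_INR; auto).
  assert (HF : ellF th k = / INR q * (2 * ellK k)).
  { rewrite <- Hom. field. lra. }
  assert (HC : ellF th k + RInt (gk k) th (PI / 2) = ellK k).
  { unfold ellK, ellF. change (fun tau => / sqrt (1 - k ^ 2 * sin tau ^ 2)) with (gk k).
    exact (RInt_Chasles (gk k) 0 th (PI/2) (gk_ex _ _ _ Hk) (gk_ex _ _ _ Hk)). }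
  assert (Hbnd : RInt (gk k) th (PI / 2) <= (PI / 2 - th) * / sqrt (1 - k ^ 2)).
  { eapply Rle_trans; [apply Rle_abs|].
    apply abs_RInt_le_const. lra. apply gk_ex; auto.
    intros t _. rewrite Rabs_pos_eq by (apply Rlt_le, gk_pos; auto). apply gk_le; auto. }
  assert (Hsin : PI / 2 - th <= 3 * cos th).
  { pose proof PI_4. rewrite <- sin_shift.
    pose proof (sin_third (PI / 2 - th) ltac:(lra)). lra. }
  assert (Hsq : 0 < sqrt (1 - k ^ 2)) by (apply sqrt_lt_R0; lra).
  assert (Hcos : cos th <= a / b * sqrt (1 - k ^ 2)).
  { unfold th. rewrite cos_asin by lra.
    rewrite <- (sqrt_pow2 (a / b)) by (apply Rlt_le, Rdiv_lt_0_compat; lra).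
    rewrite <- sqrt_mult_alt by apply pow2_ge_0.
    apply sqrt_le_1_alt. rewrite Hksq.
    assert (E : (a / b) ^ 2 * (1 - (a ^ 2 - b ^ 2) / (a ^ 2 - lam ^ 2)) - (1 - (lam / b)²)
               = (b ^ 2 - lam ^ 2) * lam ^ 2 / (b ^ 2 * (a ^ 2 - lam ^ 2))).
    { unfold Rsqr. field. split; nra. }
    assert (0 <= (b ^ 2 - lam ^ 2) * lam ^ 2 / (b ^ 2 * (a ^ 2 - lam ^ 2))).
    { apply Rdiv_le_0_compat; [apply Rmult_le_pos; [nra|apply pow2_ge_0] | apply Rmult_lt_0_compat; nra]. }
    lra. }
  assert (Hfin : RInt (gk k) th (PI / 2) <= 3 * (a / b)).
  { eapply Rle_trans; [exact Hbnd|].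
    apply Rle_trans with (3 * cos th * / sqrt (1 - k ^ 2)).
    apply Rmult_le_compat_r; [apply Rlt_le, Rinv_0_lt_compat; auto | auto].
    apply Rle_trans with (3 * (a / b * sqrt (1 - k ^ 2)) * / sqrt (1 - k ^ 2)).
    apply Rmult_le_compat_r; [apply Rlt_le, Rinv_0_lt_compat; auto | lra].
    right. field. lra. }
  assert (Hr : / INR q <= / 3) by (apply Rinv_le_contravar; lra).
  assert (Hr0 : 0 < / INR q) by (apply Rinv_0_lt_compat; lra).
  assert (ellK k * / INR q <= ellK k * / 3) by (apply Rmult_le_compat_l; lra).
  replace (9 * a / b) with (9 * (a / b)) by (unfold Rdiv; ring).
  lra.
Qed.

Lemma sup_nonneg (u : R -> R) : 0 <= sup_norm u.
Proof.
  unfold sup_norm.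
  set (E := fun y => exists x, 0 <= x <= 2 * PI /\ y = Rabs (u x)).
  destruct (Lub_Rbar_correct E) as [Hub _].
  assert (HE : E (Rabs (u 0))).
  { exists 0. split; auto. pose proof PI_RGT_0; lra. }
  specialize (Hub _ HE). revert Hub.
  destruct (Lub_Rbar E) as [r| |]; simpl; intros; try lra.
  pose proof (Rabs_pos (u 0)); lra.
Qed.

Lemma sup_bound (u : R -> R) : (forall x, continuous u x) ->
  forall x, 0 <= x <= 2 * PI -> Rabs (u x) <= sup_norm u.
Proof.
  intros Hc x Hx. unfold sup_norm.
  set (E := fun y => exists x, 0 <= x <= 2 * PI /\ y = Rabs (u x)).
  destruct (continuity_ab_maj (fun x => Rabs (u x)) 0 (2 * PI)) as [Mx [HM HMx]].
  { pose proof PI_RGT_0; lra. }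
  { intros c _. apply continuity_pt_filterlim. apply continuous_Rabs_comp. apply Hc. }
  destruct (Lub_Rbar_correct E) as [Hub Hl].
  assert (HE : E (Rabs (u x))) by (exists x; split; auto).
  assert (Hub2 : is_ub_Rbar E (Rabs (u Mx))).
  { intros y [z [Hz ->]]. simpl. apply HM; auto. }
  specialize (Hub _ HE). specialize (Hl _ Hub2). revert Hub Hl.
  destruct (Lub_Rbar E) as [r| |]; simpl; intros; try lra; try contradiction.
Qed.

Lemma cont_mul (u v : R -> R) x : continuous u x -> continuous v x ->
  continuous (fun y => u y * v y) x.
Proof. intros; apply (continuous_mult u v x); auto. Qed.

Lemma cont_plus (u v : R -> R) x : continuous u x -> continuous v x ->
  continuous (fun y => u y + v y) x.
Proof. intros; apply (continuous_plus u v x); auto. Qed.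

Lemma cont_der (u : R -> R) x : ex_derive u x -> continuous u x.
Proof. intros; apply (ex_derive_continuous u); auto. Qed.

Lemma ibp_c (f : R -> R) k q M : k ^ 2 < 1 -> (1 <= q)%nat ->
  (forall x, ex_derive f x) -> (forall x, continuous (Derive f) x) ->
  f (2 * PI) = f 0 ->
  (forall x, 0 <= x <= 2 * PI -> Rabs (Derive f x) <= M) ->
  Rabs (RInt (fun phi => f phi * c_q q k phi) 0 (2 * PI)) <= 4 * ellK k * M / INR q.
Proof.
  intros Hk Hq Hd Hc Hp HM.
  pose proof (K_pos k Hk) as HK.
  assert (Hq1 : 1 <= INR q) by (replace 1 with (INR 1) by (simpl; ring); apply le_INR; auto).
  set (al := 2 * PI * INR q / (4 * ellK k)).
  assert (Hal : 0 < al).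
  { unfold al. pose proof PI_RGT_0. apply Rdiv_lt_0_compat; nra. }
  assert (HdF : forall x, Derive (fun y => ellF y k) x = gk k x).
  { intros; apply is_derive_unique, ellF_derive; auto. }
  assert (hd : forall x, is_derive (fun x => f x * sin (al * ellF x k)) x
     (Derive f x * sin (al * ellF x k) + al * (f x * c_q q k x))).
  { intros x. auto_derive. split; [apply Hd|]. split; [apply ellF_ex; auto|exact I].
    rewrite HdF. unfold c_q, gk. fold al. change (fun x0 : R => f x0) with f. unfold Rdiv. ring. }
  assert (hfc : forall x, continuous f x) by (intros x; exact (cont_der f x (Hd x))).
  assert (hcS : forall x, continuous (fun x => sin (al * ellF x k)) x).
  { intros x; refine (cont_der _ x _). auto_derive. apply ellF_ex; auto. }
  assert (hcCo : forall x, continuous (fun x => cos (al * ellF x k)) x).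
  { intros x; refine (cont_der _ x _). auto_derive. apply ellF_ex; auto. }
  assert (hcC : forall x, continuous (fun x => c_q q k x) x).
  { intros x. change (continuous (fun x => cos (al * ellF x k) * gk k x) x).
    apply cont_mul; [apply hcCo | apply gk_cont; auto]. }
  assert (hc : forall x, continuous (fun x => Derive f x * sin (al * ellF x k) + al * (f x * c_q q k x)) x).
  { intros x. apply cont_plus; [apply cont_mul; auto|].
    apply cont_mul; [apply continuous_const|apply cont_mul; auto]. }
  pose proof (is_RInt_derive (V:=R_CompleteNormedModule) (fun x => f x * sin (al * ellF x k)) _ 0 (2 * PI)
    (fun x _ => hd x) (fun x _ => hc x)) as HI.
  assert (ex1 : ex_RInt (fun x => Derive f x * sin (al * ellF x k)) 0 (2 * PI)).
  { apply (ex_RInt_continuous (V:=R_CompleteNormedModule)); intros; apply cont_mul; auto. }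
  assert (ex2 : ex_RInt (fun x => f x * c_q q k x) 0 (2 * PI)).
  { apply (ex_RInt_continuous (V:=R_CompleteNormedModule)); intros; apply cont_mul; auto. }
  pose proof (is_RInt_plus _ _ _ _ _ _ (RInt_correct _ _ _ ex1)
     (is_RInt_scal _ _ _ al _ (RInt_correct _ _ _ ex2))) as HI2.
  set (I1 := RInt (fun x => Derive f x * sin (al * ellF x k)) 0 (2 * PI)) in *.
  set (I2 := RInt (fun x => f x * c_q q k x) 0 (2 * PI)) in *.
  assert (Hz : plus I1 (scal al I2) = minus (f (2 * PI) * sin (al * ellF (2 * PI) k)) (f 0 * sin (al * ellF 0 k))).
  { pose proof (is_RInt_unique _ _ _ _ HI) as E1. pose proof (is_RInt_unique _ _ _ _ HI2) as E2.
    etransitivity; [symmetry; exact E2|]. etransitivity; [|exact E1]. reflexivity. }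
  rewrite ellF_2PI, ellF_0 in Hz by auto.
  replace (al * (4 * ellK k)) with (0 + 2 * INR q * PI) in Hz by (unfold al; field; lra).
  rewrite sin_period, Rmult_0_r, sin_0 in Hz.
  unfold plus, scal, minus, opp in Hz; simpl in Hz. unfold mult, plus in Hz; simpl in Hz.
  assert (HI1 : Rabs I1 <= (2 * PI - 0) * M).
  { apply abs_RInt_le_const; auto. pose proof PI_RGT_0; lra.
    intros t Ht. rewrite Rabs_mult.
    assert (Rabs (sin (al * ellF t k)) <= 1) by (apply Rabs_le; apply SIN_bound).
    pose proof (HM t Ht). pose proof (Rabs_pos (Derive f t)).
    pose proof (Rabs_pos (sin (al * ellF t k))). nra. }
  assert (HI2e : Rabs I2 * al = Rabs I1).
  { rewrite <- (Rabs_pos_eq al) by lra. rewrite <- Rabs_mult.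
    replace (I2 * al) with (- I1) by lra. apply Rabs_Ropp. }
  apply Rmult_le_reg_r with al; auto.
  replace (4 * ellK k * M / INR q * al) with ((2 * PI - 0) * M) by (unfold al; field; lra).
  lra.
Qed.

Lemma ibp_s (f : R -> R) k q M : k ^ 2 < 1 -> (1 <= q)%nat ->
  (forall x, ex_derive f x) -> (forall x, continuous (Derive f) x) ->
  f (2 * PI) = f 0 ->
  (forall x, 0 <= x <= 2 * PI -> Rabs (Derive f x) <= M) ->
  Rabs (RInt (fun phi => f phi * s_q q k phi) 0 (2 * PI)) <= 4 * ellK k * M / INR q.
Proof.
  intros Hk Hq Hd Hc Hp HM.
  pose proof (K_pos k Hk) as HK.
  assert (Hq1 : 1 <= INR q) by (replace 1 with (INR 1) by (simpl; ring); apply le_INR; auto).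
  set (al := 2 * PI * INR q / (4 * ellK k)).
  assert (Hal : 0 < al).
  { unfold al. pose proof PI_RGT_0. apply Rdiv_lt_0_compat; nra. }
  assert (HdF : forall x, Derive (fun y => ellF y k) x = gk k x).
  { intros; apply is_derive_unique, ellF_derive; auto. }
  assert (hd : forall x, is_derive (fun x => f x * cos (al * ellF x k)) x
     (Derive f x * cos (al * ellF x k) + - al * (f x * s_q q k x))).
  { intros x. auto_derive. split; [apply Hd|]. split; [apply ellF_ex; auto|exact I].
    rewrite HdF. unfold s_q, gk. fold al. change (fun x0 : R => f x0) with f. unfold Rdiv. ring. }
  assert (hfc : forall x, continuous f x) by (intros x; exact (cont_der f x (Hd x))).
  assert (hcS : forall x, continuous (fun x => sin (al * ellF x k)) x).
  { intros x; refine (cont_der _ x _). auto_derive. apply ellF_ex; auto. }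
  assert (hcCo : forall x, continuous (fun x => cos (al * ellF x k)) x).
  { intros x; refine (cont_der _ x _). auto_derive. apply ellF_ex; auto. }
  assert (hcC : forall x, continuous (fun x => s_q q k x) x).
  { intros x. change (continuous (fun x => sin (al * ellF x k) * gk k x) x).
    apply cont_mul; [apply hcS | apply gk_cont; auto]. }
  assert (hc : forall x, continuous (fun x => Derive f x * cos (al * ellF x k) + - al * (f x * s_q q k x)) x).
  { intros x. apply cont_plus; [apply cont_mul; auto|].
    apply cont_mul; [apply continuous_const|apply cont_mul; auto]. }
  pose proof (is_RInt_derive (V:=R_CompleteNormedModule) (fun x => f x * cos (al * ellF x k)) _ 0 (2 * PI)
    (fun x _ => hd x) (fun x _ => hc x)) as HI.
  assert (ex1 : ex_RInt (fun x => Derive f x * cos (al * ellF x k)) 0 (2 * PI)).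
  { apply (ex_RInt_continuous (V:=R_CompleteNormedModule)); intros; apply cont_mul; auto. }
  assert (ex2 : ex_RInt (fun x => f x * s_q q k x) 0 (2 * PI)).
  { apply (ex_RInt_continuous (V:=R_CompleteNormedModule)); intros; apply cont_mul; auto. }
  pose proof (is_RInt_plus _ _ _ _ _ _ (RInt_correct _ _ _ ex1)
     (is_RInt_scal _ _ _ (- al) _ (RInt_correct _ _ _ ex2))) as HI2.
  set (I1 := RInt (fun x => Derive f x * cos (al * ellF x k)) 0 (2 * PI)) in *.
  set (I2 := RInt (fun x => f x * s_q q k x) 0 (2 * PI)) in *.
  assert (Hz : plus I1 (scal (- al) I2) = minus (f (2 * PI) * cos (al * ellF (2 * PI) k)) (f 0 * cos (al * ellF 0 k))).
  { pose proof (is_RInt_unique _ _ _ _ HI) as E1. pose proof (is_RInt_unique _ _ _ _ HI2) as E2.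
    etransitivity; [symmetry; exact E2|]. etransitivity; [|exact E1]. reflexivity. }
  rewrite ellF_2PI, ellF_0 in Hz by auto.
  replace (al * (4 * ellK k)) with (0 + 2 * INR q * PI) in Hz by (unfold al; field; lra).
  rewrite cos_period, Rmult_0_r, cos_0, Hp in Hz.
  unfold plus, scal, minus, opp in Hz; simpl in Hz. unfold mult, plus in Hz; simpl in Hz.
  assert (HI1 : Rabs I1 <= (2 * PI - 0) * M).
  { apply abs_RInt_le_const; auto. pose proof PI_RGT_0; lra.
    intros t Ht. rewrite Rabs_mult.
    assert (Rabs (cos (al * ellF t k)) <= 1) by (apply Rabs_le; apply COS_bound).
    pose proof (HM t Ht). pose proof (Rabs_pos (Derive f t)).
    pose proof (Rabs_pos (cos (al * ellF t k))). nra. }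
  assert (HI2e : Rabs I2 * al = Rabs I1).
  { rewrite <- (Rabs_pos_eq al) by lra. rewrite <- Rabs_mult.
    replace (I2 * al) with I1 by lra. reflexivity. }
  apply Rmult_le_reg_r with al; auto.
  replace (4 * ellK k * M / INR q * al) with ((2 * PI - 0) * M) by (unfold al; field; lra).
  lra.
Qed.

Theorem lemma10 :
  forall a b : R, 0 < b -> b <= a ->
  exists C : R,
    forall f : R -> R, C1_periodic f ->
    forall (q : nat) (lam : R), (3 <= q)%nat ->
      0 < lam < b -> omega_lam a b lam = / INR q ->
      Rabs (RInt (fun phi => f phi * c_q q (k_lam a b lam) phi) 0 (2 * PI))
        <= C * C1_norm f / INR q /\
      Rabs (RInt (fun phi => f phi * s_q q (k_lam a b lam) phi) 0 (2 * PI))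
        <= C * C1_norm f / INR q.
Proof.
  intros a b hb hab. exists (36 * a / b).
  intros f [Hd [Hc Hp]] q lam hq hl hom.
  assert (Hba : 0 < b <= a) by lra.
  pose proof (k_lam_lt1 a b lam Hba hl) as Hk.
  pose proof (K_bound a b lam q Hba hl hq hom) as HKb.
  pose proof (K_pos _ Hk) as HK.
  assert (Hp0 : f (2 * PI) = f 0) by (rewrite <- (Hp 0); f_equal; ring).
  pose proof (sup_bound (Derive f) Hc) as HM.
  assert (HM0 : 0 <= sup_norm (Derive f)).
  { eapply Rle_trans; [apply Rabs_pos|apply (HM 0)]. pose proof PI_RGT_0; lra. }
  pose proof (sup_nonneg f) as HS.
  assert (Hq1 : (1 <= q)%nat) by lia.
  assert (Hq3 : 0 < INR q) by (apply lt_0_INR; lia).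
  assert (Hab : 0 <= a / b) by (apply Rlt_le, Rdiv_lt_0_compat; lra).
  assert (Fin : 4 * ellK (k_lam a b lam) * sup_norm (Derive f) / INR q <= 36 * a / b * C1_norm f / INR q).
  { unfold Rdiv. apply Rmult_le_compat_r; [apply Rlt_le, Rinv_0_lt_compat; auto|].
    unfold C1_norm. replace (9 * a / b) with (9 * (a / b)) in HKb by (unfold Rdiv; ring).
    replace (36 * a * / b) with (36 * (a / b)) by (unfold Rdiv; ring). nra. }
  split.
  - eapply Rle_trans; [apply (ibp_c f _ q _ Hk Hq1 Hd Hc Hp0 HM)|exact Fin].
  - eapply Rle_trans; [apply (ibp_s f _ q _ Hk Hq1 Hd Hc Hp0 HM)|exact Fin].
Qed.
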